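(* With the height $H$ and distance $d$ on $Y_4$ described in the context, one has $$\alpha(Q,Y_4)=\alpha_{\mathrm{ess}}(Q)=2 .$$ Consequently $Y_4$ contains no locally accumulating subvariety for $Q$.
   Context: Let $Y_4$ be the smooth projective toric surface over $\mathbb{Q}$ obtained by blowing up $\mathbb{P}^1\times\mathbb{P}^1$ (coordinates $[x:y]\times[s:t]$) at the four torus-invariant points $[1:0]\times[1:0]$, $[0:1]\times[1:0]$, $[1:0]\times[0:1]$, $[0:1]\times[0:1]$; outside the exceptional divisors we keep the coordinates $[x:y]\times[s:t]$. Let $Q$ be the point lying over $[1:1]\times[1:1]$. For a rational point $P=[x:y]\times[s:t]$ off the exceptional divisors, written with integers satisfying $\gcd(x,y)=\gcd(s,t)=1$, the anticanonical Weil height is $$H(P)=\frac{\max(|x^2st|,|y^2st|,|t^2xy|,|s^2xy|)}{\gcd(x,s)\gcd(x,t)\gcd(y,s)\gcd(y,t)}.$$ Near $Q$ use affine coordinates $(w,z)=(y/x,t/s)$, the local diffeomorphism $\rho(P)=(w-1,z-1)\in\mathbb{R}^2$ and the distance $d(P)=\max(|w-1|,|z-1|)$. For a constructible subset $V\subset Y_4$, the approximation constant $\alpha(Q,V)$ is the supremum of the $\gamma>0$ for which there exists $C>0$ with $d(P)^\gamma H(P)\ge C$ for all $P\in V(\mathbb{Q})$, $P\neq Q$ (equivalently the infimum of the $\gamma>0$ for which there is a sequence $P_i\in V(\mathbb{Q})$ with $d(P_i)\to0$ and $d(P_i)^\gamma H(P_i)$ bounded). The essential constant is $\alpha_{\mathrm{ess}}(Q)=\sup_V\alpha(Q,V)$,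 $V$ ranging over dense Zariski open subsets of $Y_4$. A subvariety $Z$ is locally accumulating if $\alpha(Q,W)<\alpha_{\mathrm{ess}}(Q)$ for every dense open $W\subset Z$. *)

(* Defs.v *)
From Stdlib Require Import Reals ZArith QArith Qreals List.
Open Scope R_scope.

(** A rational point [x:y] x [s:t] of Y_4 off the exceptional divisors,
    given by integer coordinates (the representative is unique up to the
    signs of (x,y) and of (s,t); all quantities below are sign-invariant). *)
Record pt := mkPt { px : Z; py : Z; ps : Z; pt_ : Z }.

(** gcd(x,y) = gcd(s,t) = 1, and P is not one of the four blown-up points. *)
Definition valid (P : pt) : Prop :=
  Z.gcd (px P) (py P) = 1%Z /\ Z.gcd (ps P) (pt_ P) = 1%Z /\
  ~ ((px P = 0 \/ py P = 0) /\ (ps P = 0 \/ pt_ P = 0))%Z.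

(** Rational points of Y_4 (those off the exceptional divisors; points on
    the exceptional divisors are far from Q and play no role). *)
Definition Y4 (P : pt) : Prop := valid P.

(** the affine chart (w,z) = (y/x, t/s) around Q *)
Definition in_chart (P : pt) : Prop := px P <> 0%Z /\ ps P <> 0%Z.
Definition in_torus (P : pt) : Prop :=
  px P <> 0%Z /\ py P <> 0%Z /\ ps P <> 0%Z /\ pt_ P <> 0%Z.

Definition wcoord (P : pt) : R := IZR (py P) / IZR (px P).
Definition zcoord (P : pt) : R := IZR (pt_ P) / IZR (ps P).

Definition isQ (P : pt) : Prop := py P = px P /\ pt_ P = ps P.

Definition dist (P : pt) : R :=
  Rmax (Rabs (wcoord P - 1)) (Rabs (zcoord P - 1)).

(** anticanonical height *)
Definition height (P : pt) : R :=
  let x := px P in let y := py P in let s := ps P in let t := pt_ P in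
  IZR (Z.max (Z.max (Z.abs (x*x*s*t)) (Z.abs (y*y*s*t)))
             (Z.max (Z.abs (t*t*x*y)) (Z.abs (s*s*x*y))))
  / IZR (Z.gcd x s * Z.gcd x t * Z.gcd y s * Z.gcd y t).

Definition admissible (V : pt -> Prop) (g : R) : Prop :=
  0 < g /\
  exists Pn : nat -> pt,
    (forall n, V (Pn n) /\ valid (Pn n) /\ in_chart (Pn n) /\ ~ isQ (Pn n)) /\
    Un_cv (fun n => dist (Pn n)) 0 /\
    exists B, forall n, Rabs (Rpower (dist (Pn n)) g * height (Pn n)) <= B.

(** alpha(Q,V) is the infimum (in [0,+oo]) of the admissible gamma.
    We express comparisons of alpha(Q,V) with a real number a literally. *)
Definition alpha_le (V : pt -> Prop) (a : R) : Prop :=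
  forall b, a < b -> exists g, admissible V g /\ g < b.
Definition alpha_ge (V : pt -> Prop) (a : R) : Prop :=
  forall g, admissible V g -> a <= g.
Definition alpha_lt (V : pt -> Prop) (a : R) : Prop :=
  exists g, admissible V g /\ g < a.
Definition alpha_eq (V : pt -> Prop) (a : R) : Prop :=
  alpha_le V a /\ alpha_ge V a.

(** Polynomials in Q[w,z] (coefficients indexed by exponents i,j <= pdeg). *)
Record poly2 := mkPoly2 { pdeg : nat; pcoef : nat -> nat -> Q }.

Definition peval (f : poly2) (w z : R) : R :=
  sum_f_R0 (fun i => sum_f_R0 (fun j => Q2R (pcoef f i j) * w ^ i * z ^ j)
                              (pdeg f)) (pdeg f).

Definition pnonzero (f : poly2) : Prop :=
  exists i j, (i <= pdeg f)%nat /\ (j <= pdeg f)%nat /\ ~ (pcoef f i j == 0)%Q.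

Definition evalP (f : poly2) (P : pt) : R := peval f (wcoord P) (zcoord P).

(** Open subset D(S) of the torus: points where some f in S does not vanish.
    It is a dense open subset of Y_4 iff some f in S is a nonzero polynomial. *)
Definition dopen (S : list poly2) (P : pt) : Prop :=
  valid P /\ in_torus P /\ exists f, In f S /\ evalP f P <> 0.

Definition dense_family (S : list poly2) : Prop :=
  exists f, In f S /\ pnonzero f.

(** alpha_ess(Q) = sup over dense open V of alpha(Q,V) equals a. *)
Definition alpha_ess_eq (a : R) : Prop :=
  (forall S, dense_family S -> alpha_le (dopen S) a) /\
  (forall b, b < a -> exists S, dense_family S /\
                        exists c, b < c /\ alpha_ge (dopen S) c).

Definition closedZ (S : list poly2) (P : pt) : Prop :=
  valid P /\ in_torus P /\ forall f, In f S -> evalP f P = 0.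

(** W = Z cap D(T) is (Zariski-)dense in Z: every polynomial vanishing on
    W vanishes on Z. *)
Definition dense_in_closed (S T : list poly2) : Prop :=
  forall g : poly2,
    (forall P, closedZ S P -> dopen T P -> evalP g P = 0) ->
    forall P, closedZ S P -> evalP g P = 0.

Definition locally_accumulating (S : list poly2) : Prop :=
  exists a, alpha_ess_eq a /\
    forall T, dense_in_closed S T ->
      alpha_lt (fun P => closedZ S P /\ dopen T P) a.

(* Main.v *)
Require Import Defs.
From Stdlib Require Import Reals ZArith QArith Qreals List Lra Lia Psatz Classical ClassicalEpsilon.
Open Scope R_scope.


Fixpoint deg_le (n : nat) (phi : R -> R) : Prop :=
  match n with
  | O => forall t, phi t = phi 0
  | S n' => forall a, exists psi, deg_le n' psi /\ forall t, phi t = phi a + (t - a) * psi t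
  end.

Lemma deg_le_ext n : forall phi chi, deg_le n phi -> (forall t, phi t = chi t) -> deg_le n chi.
Proof.
  induction n as [|n IH]; simpl; intros phi chi H E.
  - intro t; rewrite <- !E; apply H.
  - intro a; destruct (H a) as [psi [Hp Ht]]; exists psi; split; auto.
    intro t; rewrite <- !E; apply Ht.
Qed.

Lemma deg_le_const n : forall c, deg_le n (fun _ => c).
Proof.
  induction n as [|n IH]; simpl; intros; auto.
  exists (fun _ => 0); split; [apply IH|]. intro; ring.
Qed.

Lemma deg_le_S n : forall phi, deg_le n phi -> deg_le (S n) phi.
Proof.
  induction n as [|n IH]; intros phi H.
  - simpl in *. intro a. exists (fun _ => 0). split; auto.
    intro t. rewrite (H t), (H a). ring.
  - intro a. destruct (H a) as [psi [Hp Ht]]. exists psi. split; auto.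
Qed.

Lemma deg_le_mono n m phi : (n <= m)%nat -> deg_le n phi -> deg_le m phi.
Proof.
  induction 1; auto. intro; apply deg_le_S; auto.
Qed.

Lemma deg_le_id : deg_le 1 (fun t => t).
Proof. simpl. intro a. exists (fun _ => 1). split; auto. intro; ring. Qed.

Lemma deg_le_plus n : forall phi chi, deg_le n phi -> deg_le n chi ->
  deg_le n (fun t => phi t + chi t).
Proof.
  induction n as [|n IH]; simpl; intros phi chi H1 H2.
  - intro t; rewrite H1, H2; auto.
  - intro a. destruct (H1 a) as [p1 [Hp1 Ht1]]. destruct (H2 a) as [p2 [Hp2 Ht2]].
    exists (fun t => p1 t + p2 t). split; auto.
    intro t. rewrite Ht1, Ht2. ring.
Qed.

Lemma deg_le_scal n : forall c phi, deg_le n phi -> deg_le n (fun t => c * phi t).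
Proof.
  induction n as [|n IH]; simpl; intros c phi H.
  - intro t; rewrite H; auto.
  - intro a. destruct (H a) as [p [Hp Ht]]. exists (fun t => c * p t). split; auto.
    intro t. rewrite Ht. ring.
Qed.

Lemma deg_le_mult n : forall m phi chi, deg_le n phi -> deg_le m chi ->
  deg_le (n + m) (fun t => phi t * chi t).
Proof.
  induction n as [|n IH]; intros m phi chi H1 H2.
  - simpl in H1. simpl. apply deg_le_ext with (fun t => phi 0 * chi t).
    + apply deg_le_scal; auto.
    + intro t; rewrite (H1 t); auto.
  - destruct m as [|m].
    + apply deg_le_ext with (fun t => chi 0 * phi t).
      * rewrite Nat.add_0_r. apply deg_le_scal; auto.
      * intro t; simpl in H2; rewrite (H2 t); ring.
    + intro a. destruct (H1 a) as [p1 [Hp1 Ht1]]. destruct (H2 a) as [p2 [Hp2 Ht2]].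
      exists (fun t => p1 t * chi t + phi a * p2 t). split.
      * apply deg_le_plus.
        -- apply IH; auto.
        -- apply deg_le_mono with m; [lia|]. apply deg_le_scal; auto.
      * intro t. cbv beta. rewrite (Ht1 t). rewrite Rmult_plus_distr_r.
        rewrite (Ht2 t) at 1. ring.
Qed.

Lemma deg_le_pow n k : forall phi, deg_le n phi -> deg_le (n * k) (fun t => phi t ^ k).
Proof.
  induction k as [|k IH]; intros phi H.
  - simpl. apply deg_le_const.
  - apply deg_le_ext with (fun t => phi t * phi t ^ k).
    + replace (n * S k)%nat with (n + n * k)%nat by lia. apply deg_le_mult; auto.
    + intro; simpl; auto.
Qed.

Lemma deg_le_sum n N : forall F : nat -> R -> R, (forall i, (i <= N)%nat -> deg_le n (F i)) ->
  deg_le n (fun t => sum_f_R0 (fun i => F i t) N).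
Proof.
  induction N as [|N IH]; intros F H; simpl.
  - apply H; lia.
  - apply deg_le_plus. apply IH; intros; apply H; lia. apply H; lia.
Qed.

Lemma deg_le_root n : forall phi (g : nat -> R), deg_le n phi ->
  (forall i j, (i <= n)%nat -> (j <= n)%nat -> i <> j -> g i <> g j) ->
  (forall i, (i <= n)%nat -> phi (g i) = 0) -> forall t, phi t = 0.
Proof.
  induction n as [|n IH]; intros phi g H Hd Hr t.
  - simpl in H. rewrite H. rewrite <- (H (g 0%nat)). apply Hr; lia.
  - destruct (H (g (S n))) as [psi [Hp Ht]].
    assert (Hz : forall t, psi t = 0).
    { apply IH with g.
      - exact Hp.
      - intros; apply Hd; lia.
      - intros i Hi. assert (E := Ht (g i)). rewrite Hr in E by lia.
        rewrite Hr in E by lia.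
        assert (g i - g (S n) <> 0) by (apply Rminus_eq_contra, Hd; lia).
        rewrite Rplus_0_l in E.
        destruct (Rmult_integral _ _ (eq_sym E)); [contradiction|auto]. }
    rewrite Ht, Hz, Hr by lia. ring.
Qed.


Definition hom (f : poly2) (a b c e : R) : R :=
  sum_f_R0 (fun i => sum_f_R0 (fun j =>
     Q2R (pcoef f i j) * (a ^ i * b ^ (pdeg f - i)) * (c ^ j * e ^ (pdeg f - j)))
     (pdeg f)) (pdeg f).

Lemma pow_div_R a b n : b <> 0 -> (a / b) ^ n = a ^ n / b ^ n.
Proof.
  intro Hb. induction n as [|n IH]; simpl. field. rewrite IH. field. split; auto.
  apply pow_nonzero; auto.
Qed.

Lemma pow_split b i D : (i <= D)%nat -> b ^ D = b ^ i * b ^ (D - i).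
Proof. intro H. rewrite <- pow_add. f_equal. lia. Qed.

Lemma hom_peval f a b c e : b <> 0 -> e <> 0 ->
  hom f a b c e = b ^ pdeg f * e ^ pdeg f * peval f (a / b) (c / e).
Proof.
  intros Hb He. unfold hom, peval.
  rewrite (scal_sum _ _ (b ^ pdeg f * e ^ pdeg f)). apply sum_eq. intros i Hi.
  rewrite (Rmult_comm (sum_f_R0 _ _)). rewrite scal_sum. apply sum_eq. intros j Hj.
  rewrite !pow_div_R by auto.
  rewrite (pow_split b i (pdeg f)) by auto.
  rewrite (pow_split e j (pdeg f)) by auto.
  field. split; apply pow_nonzero; auto.
Qed.

Lemma hom_scale f a b c e l m :
  hom f (l * a) (l * b) (m * c) (m * e) = l ^ pdeg f * m ^ pdeg f * hom f a b c e.
Proof.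
  unfold hom. rewrite scal_sum. apply sum_eq. intros i Hi.
  rewrite (Rmult_comm (sum_f_R0 _ _)). rewrite scal_sum. apply sum_eq. intros j Hj.
  rewrite !Rpow_mult_distr.
  rewrite (pow_split l i (pdeg f)) by auto.
  rewrite (pow_split m j (pdeg f)) by auto. ring.
Qed.

Lemma hom_deg f k A B C E :
  deg_le k A -> deg_le k B -> deg_le k C -> deg_le k E ->
  deg_le (2 * k * pdeg f) (fun t => hom f (A t) (B t) (C t) (E t)).
Proof.
  intros HA HB HC HE. unfold hom.
  apply deg_le_sum. intros i Hi. apply deg_le_sum. intros j Hj.
  apply deg_le_ext with (fun t => (Q2R (pcoef f i j) * (A t ^ i * B t ^ (pdeg f - i)))
     * (C t ^ j * E t ^ (pdeg f - j))); [|intro; ring].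
  apply deg_le_mono with (k * i + k * (pdeg f - i) + (k * j + k * (pdeg f - j)))%nat.
  { replace (k * i + k * (pdeg f - i))%nat with (k * pdeg f)%nat.
    replace (k * j + k * (pdeg f - j))%nat with (k * pdeg f)%nat. lia.
    rewrite <- Nat.mul_add_distr_l. f_equal. lia.
    rewrite <- Nat.mul_add_distr_l. f_equal. lia. }
  apply deg_le_mult.
  - apply deg_le_scal. apply deg_le_mult; apply deg_le_pow; auto.
  - apply deg_le_mult; apply deg_le_pow; auto.
Qed.

Lemma sum_zero_f N : sum_f_R0 (fun _ => 0) N = 0.
Proof. induction N; simpl; auto. rewrite IHN; ring. Qed.

Lemma coef_zero n : forall a : nat -> R,
  (forall t, 1 < t -> sum_f_R0 (fun i => a i * t ^ i) n = 0) ->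
  forall i, (i <= n)%nat -> a i = 0.
Proof.
  induction n as [|n IH]; intros a H i Hi.
  - assert (E := H 2 ltac:(lra)). simpl in E. replace i with 0%nat by lia. lra.
  - set (P := fun t => sum_f_R0 (fun i => a i * t ^ i) (S n)).
    assert (HP : deg_le (S n) P).
    { unfold P. apply deg_le_sum. intros k Hk. apply deg_le_scal.
      apply deg_le_mono with (1 * k)%nat. lia. apply deg_le_pow. apply deg_le_id. }
    assert (Z0 : forall t, P t = 0).
    { apply deg_le_root with (S n) (fun i => INR i + 2); auto.
      - intros i0 j0 _ _ Hne E. apply Hne. apply INR_eq. lra.
      - intros i0 _. unfold P. apply H. pose proof (pos_INR i0). lra. }
    assert (A0 : a 0%nat = 0).
    { assert (E := Z0 0). unfold P in E. rewrite decomp_sum in E by lia.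
      simpl pred in E.
      rewrite sum_eq with (Bn := fun _ => 0) in E.
      rewrite sum_zero_f in E. simpl in E. lra.
      intros k _. simpl. ring. }
    assert (Hq : forall i, (i <= n)%nat -> a (S i) = 0).
    { apply IH. intros t Ht.
      assert (E := H t Ht). rewrite decomp_sum in E by lia. simpl pred in E.
      rewrite A0 in E.
      rewrite sum_eq with (Bn := fun i => t * (a (S i) * t ^ i)) in E.
      2: intros; simpl; ring. rewrite sum_eq with (Bn := fun i => (a (S i) * t ^ i) * t) in E by (intros; ring). rewrite <- scal_sum in E.
      replace (0 * t ^ 0 + t * sum_f_R0 (fun i : nat => a (S i) * t ^ i) n) with (t * sum_f_R0 (fun i : nat => a (S i) * t ^ i) n) in E by ring.
      apply Rmult_integral in E. destruct E as [E|E]; [|lra].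
      lra. }
    destruct i. auto. apply Hq. lia.
Qed.


Fixpoint pell (m : Z) (j : nat) : Z * Z :=
  match j with
  | O => (m, 1%Z)
  | S j' => let qu := pell m j' in
            (m * fst qu + (m * m - 1) * snd qu, fst qu + m * snd qu)%Z
  end.

Definition sg (m : Z) : Z := (m * m - 1)%Z.
Definition pq m j := fst (pell m j).
Definition pu m j := snd (pell m j).

Lemma pell_props m j : (2 <= m)%Z ->
  (pq m j * pq m j - sg m * pu m j * pu m j = 1 /\ 1 <= pq m j /\
   Z.of_nat j + 1 <= pu m j)%Z.
Proof.
  intro Hm. unfold pq, pu, sg. induction j as [|j IH]; simpl.
  - lia.
  - destruct IH as [H1 [H2 H3]].
    set (q := fst (pell m j)) in *. set (u := snd (pell m j)) in *.
    split; [|split].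
    + replace ((m * q + (m * m - 1) * u) * (m * q + (m * m - 1) * u) -
        (m * m - 1) * (q + m * u) * (q + m * u))%Z with (q * q - (m * m - 1) * u * u)%Z by ring.
      auto.
    + nia.
    + nia.
Qed.

Lemma pell_step m j : (2 <= m)%Z -> (pu m j < pu m (S j))%Z.
Proof.
  intro Hm. destruct (pell_props m j Hm) as [H1 [H2 H3]].
  unfold pu, pq in *. simpl. nia.
Qed.

Lemma pell_mono m : (2 <= m)%Z -> forall j k, (j < k)%nat -> (pu m j < pu m k)%Z.
Proof.
  intros Hm j k H. induction H.
  - apply pell_step; auto.
  - pose proof (pell_step m m0 Hm). lia.
Qed.

Definition pv m j := (sg m * pu m j - pq m j)%Z.
Definition pp m j := (pq m j - pu m j)%Z.
Definition xx m j := (pu m j * pv m j)%Z.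
Definition ss m j := (sg m * pu m j * pp m j)%Z.
Definition Ppt m j := mkPt (xx m j) (xx m j + 1) (ss m j) (ss m j - 1).

Lemma pt_facts m j : (2 <= m)%Z ->
  let q := pq m j in let u := pu m j in let v := pv m j in let p := pp m j in
  (3 <= sg m /\ 1 <= u /\ u <= v /\ 1 <= p /\ p <= q /\
   xx m j + 1 = p * q /\ ss m j - 1 = v * q /\ Z.of_nat j + 1 <= u /\
   q * q - sg m * u * u = 1)%Z.
Proof.
  intros Hm q u v p. destruct (pell_props m j Hm) as [H1 [H2 H3]].
  fold q u in H1, H2, H3.
  assert (Hs : (3 <= sg m)%Z) by (unfold sg; nia).
  assert (Hv : (q <= (sg m - 1) * u)%Z).
  { assert (E1 : (sg m * (sg m - 3) >= 0)%Z) by nia.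
    assert (E2 : (u * u >= 1)%Z) by nia.
    assert (E3 : ((sg m * (sg m - 3) + 1) * (u * u) >= 1)%Z) by nia.
    assert (((sg m - 1) * u) * ((sg m - 1) * u) >= sg m * u * u + 1)%Z.
    { replace (((sg m - 1) * u) * ((sg m - 1) * u))%Z with
        ((sg m * (sg m - 3) + 1) * (u * u) + sg m * u * u)%Z by ring. lia. }
    destruct (Z_le_gt_dec q ((sg m - 1) * u)) as [|Hc]; auto.
    assert (q * q >= ((sg m - 1) * u + 1) * ((sg m - 1) * u + 1))%Z.
    { apply Z.le_ge, Z.mul_le_mono_nonneg; nia. }
    nia. }
  unfold v, p, xx, ss, pv, pp. fold q u.
  repeat split; try lia; try nia.
Qed.


Lemma gcd_ge (a b c : Z) : (0 < c)%Z -> (c | a)%Z -> (c | b)%Z -> a <> 0%Z -> (c <= Z.gcd a b)%Z.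
Proof.
  intros Hc Ha Hb Ha0. apply Z.divide_pos_le.
  - pose proof (Z.gcd_nonneg a b).
    assert (Z.gcd a b <> 0%Z) by (intro E; apply Ha0; apply (Z.gcd_eq_0_l a b E)). lia.
  - apply Z.gcd_greatest; auto.
Qed.

Lemma div_le_K A B K : 0 < B -> A <= K * B -> A / B <= K.
Proof.
  intros HB H. apply Rmult_le_reg_r with B; auto. unfold Rdiv.
  rewrite Rmult_assoc, Rinv_l by lra. lra.
Qed.


Lemma Ppt_valid (m : Z) (Hm : (2 <= m)%Z) (j : nat) : valid (Ppt m j).
Proof.
  destruct (pt_facts m j Hm) as [Hs [Hu [Huv [Hp [Hpq [Ey [Et [Hj Hpell]]]]]]]].
  unfold valid, Ppt; simpl. split; [|split].
  - replace (xx m j + 1)%Z with (1 + 1 * xx m j)%Z by ring.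
    rewrite Z.gcd_add_mult_diag_r. apply Z.gcd_1_r.
  - rewrite Z.gcd_comm. replace (ss m j)%Z with (1 + 1 * (ss m j - 1))%Z at 2 by ring.
    rewrite Z.gcd_add_mult_diag_r. apply Z.gcd_1_r.
  - unfold xx, ss in *. nia.
Qed.

Lemma Ppt_pos (m : Z) (Hm : (2 <= m)%Z) (j : nat) : (1 <= xx m j /\ 3 <= ss m j /\ Z.of_nat j + 1 <= xx m j /\ pu m j <= ss m j)%Z.
Proof.
  destruct (pt_facts m j Hm) as [Hs [Hu [Huv [Hp [Hpq [Ey [Et [Hj Hpell]]]]]]]].
  unfold xx, ss. nia.
Qed.

Lemma Ppt_torus (m : Z) (Hm : (2 <= m)%Z) (j : nat) : in_torus (Ppt m j).
Proof.
  destruct (Ppt_pos m Hm j) as [H1 [H2 _]]. unfold in_torus, Ppt; simpl. lia.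
Qed.

Lemma Ppt_chart (m : Z) (Hm : (2 <= m)%Z) (j : nat) : in_chart (Ppt m j).
Proof.
  destruct (Ppt_pos m Hm j) as [H1 [H2 _]]. unfold in_chart, Ppt; simpl. lia.
Qed.

Lemma Ppt_notQ (m : Z) (j : nat) : ~ isQ (Ppt m j).
Proof. unfold isQ, Ppt; simpl. lia. Qed.

Lemma Ppt_dist (m : Z) (Hm : (2 <= m)%Z) (j : nat) : Defs.dist (Ppt m j) = Rmax (1 / IZR (xx m j)) (1 / IZR (ss m j)).
Proof.
  destruct (Ppt_pos m Hm j) as [H1 [H2 _]].
  assert (X : 0 < IZR (xx m j)) by (apply IZR_lt; lia).
  assert (S : 0 < IZR (ss m j)) by (apply IZR_lt; lia).
  unfold Defs.dist, wcoord, zcoord, Ppt; simpl. rewrite plus_IZR, minus_IZR.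
  f_equal.
  - replace ((IZR (xx m j) + 1) / IZR (xx m j) - 1) with (1 / IZR (xx m j)) by (field; lra).
    apply Rabs_right. apply Rle_ge, Rlt_le. apply Rdiv_lt_0_compat; lra.
  - replace ((IZR (ss m j) - 1) / IZR (ss m j) - 1) with (- (1 / IZR (ss m j))) by (field; lra).
    rewrite Rabs_Ropp. apply Rabs_right. apply Rle_ge, Rlt_le. apply Rdiv_lt_0_compat; lra.
Qed.

Lemma Ppt_dist_le (m : Z) (Hm : (2 <= m)%Z) (j : nat) : 0 < Defs.dist (Ppt m j) <= 1 / (INR j + 1).
Proof.
  destruct (Ppt_pos m Hm j) as [H1 [H2 [H3 H4]]].
  destruct (pt_facts m j Hm) as [Hs [Hu [_ [_ [_ [_ [_ [Hj0 _]]]]]]]].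
  rewrite (Ppt_dist m Hm j).
  assert (Hj : 0 < INR j + 1) by (pose proof (pos_INR j); lra).
  assert (A : INR j + 1 <= IZR (xx m j)).
  { rewrite INR_IZR_INZ. rewrite <- plus_IZR. apply IZR_le. lia. }
  assert (B : INR j + 1 <= IZR (ss m j)).
  { rewrite INR_IZR_INZ. rewrite <- plus_IZR. apply IZR_le. lia. }
  split.
  - eapply Rlt_le_trans; [|apply Rmax_l]. apply Rdiv_lt_0_compat; lra.
  - apply Rmax_lub; apply Rmult_le_compat_l; try lra; apply Rinv_le_contravar; lra.
Qed.


Lemma max_bound (x s : Z) : (1 <= x)%Z -> (3 <= s)%Z ->
  (Z.max (Z.max (Z.abs (x * x * s * (s - 1))) (Z.abs ((x + 1) * (x + 1) * s * (s - 1))))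
        (Z.max (Z.abs ((s - 1) * (s - 1) * x * (x + 1))) (Z.abs (s * s * x * (x + 1))))
   <= (x + 1) * (x + 1) * (s * s))%Z.
Proof.
  intros Hx Hs.
    assert (a1 : (0 <= x * x)%Z) by nia. assert (a2 : (0 <= s * (s - 1))%Z) by nia.
    assert (a3 : (0 <= (x + 1) * (x + 1))%Z) by nia.
    assert (a4 : (0 <= (s - 1) * (s - 1))%Z) by nia.
    assert (a5 : (0 <= s * s)%Z) by nia.
    assert (a6 : (0 <= x * (x + 1))%Z) by nia.
    assert (b1 : (x * x <= (x + 1) * (x + 1))%Z) by nia.
    assert (b2 : (s * (s - 1) <= s * s)%Z) by nia.
    assert (b3 : ((s - 1) * (s - 1) <= s * s)%Z) by nia.
    assert (b4 : (x * (x + 1) <= (x + 1) * (x + 1))%Z) by nia.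
    repeat apply Z.max_lub.
    - replace (x * x * s * (s - 1))%Z with ((x * x) * (s * (s - 1)))%Z by ring.
      rewrite Z.abs_eq by (apply Z.mul_nonneg_nonneg; auto).
      apply Z.mul_le_mono_nonneg; auto.
    - replace ((x + 1) * (x + 1) * s * (s - 1))%Z with (((x + 1) * (x + 1)) * (s * (s - 1)))%Z by ring.
      rewrite Z.abs_eq by (apply Z.mul_nonneg_nonneg; auto).
      apply Z.mul_le_mono_nonneg; auto. lia.
    - replace ((s - 1) * (s - 1) * x * (x + 1))%Z with ((x * (x + 1)) * ((s - 1) * (s - 1)))%Z by ring.
      rewrite Z.abs_eq by (apply Z.mul_nonneg_nonneg; auto).
      apply Z.mul_le_mono_nonneg; auto.
    - replace (s * s * x * (x + 1))%Z with ((x * (x + 1)) * (s * s))%Z by ring.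
      rewrite Z.abs_eq by (apply Z.mul_nonneg_nonneg; auto).
      apply Z.mul_le_mono_nonneg; auto. lia.
Qed.

Lemma key_ineq (u v p q sg x s: Z) : (1 <= u)%Z -> (u <= v)%Z -> (1 <= p)%Z -> (p <= q)%Z ->
  (3 <= sg)%Z -> x = (u * v)%Z -> (x + 1 = p * q)%Z -> s = (sg * u * p)%Z ->
  ((x + 1) * (x + 1) * (s * s) + (x + 1) * (x + 1) * (x * x) <=
                 (4 * sg * sg + 2) * (x * x) * (u * v * p * q))%Z.
Proof.
  intros Hu Huv Hp Hpq Hs Ex Ey Es.
  assert (uv1 : (1 <= u * v)%Z) by nia.
  assert (y2 : (p * q <= 2 * (u * v))%Z) by (rewrite <- Ey, Ex; lia).
  assert (v1 : (1 <= v)%Z) by lia.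
  assert (pp2 : (p * p <= 2 * (v * v))%Z).
  { assert (p * p <= p * q)%Z by (apply Z.mul_le_mono_nonneg_l; lia).
    assert (u * v <= v * v)%Z by (apply Z.mul_le_mono_nonneg_r; lia). lia. }
  rewrite Ey, Es, Ex.
  assert (T1 : (p * q * (p * p) <= 4 * (u * v * (v * v)))%Z).
  { assert (p * q * (p * p) <= (2 * (u * v)) * (2 * (v * v)))%Z.
    { apply Z.mul_le_mono_nonneg; nia. }
    lia. }
  assert (T2 : (p * q * (v * v) <= 2 * (u * v * (v * v)))%Z).
  { replace (2 * (u * v * (v * v)))%Z with ((2 * (u * v)) * (v * v))%Z by ring.
    apply Z.mul_le_mono_nonneg_r; nia. }
  assert (0 <= sg * sg)%Z by nia.
  assert (0 <= u * u * p * q)%Z by nia.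
  replace ((p * q) * (p * q) * (sg * u * p * (sg * u * p)) + (p * q) * (p * q) * (u * v * (u * v)))%Z
    with ((u * u * p * q) * ((sg * sg) * (p * q * (p * p)) + p * q * (v * v)))%Z by ring.
  replace ((4 * sg * sg + 2) * (u * v * (u * v)) * (u * v * p * q))%Z with
    ((u * u * p * q) * ((sg * sg) * (4 * (u * v * (v * v))) + 2 * (u * v * (v * v))))%Z by ring.
  apply Z.mul_le_mono_nonneg_l; auto.
  assert ((sg * sg) * (p * q * (p * p)) <= (sg * sg) * (4 * (u * v * (v * v))))%Z.
  { apply Z.mul_le_mono_nonneg_l; auto. }
  lia.
Qed.


Lemma real_part X S G0 G Mr K : 0 < X -> 0 < S -> 0 < G0 -> G0 <= G -> 0 <= Mr ->
  Mr <= (X + 1) * (X + 1) * (S * S) ->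
  (X + 1) * (X + 1) * (S * S) + (X + 1) * (X + 1) * (X * X) <= K * (X * X) * G0 ->
  Rmax (1 / X) (1 / S) ^ 2 * (Mr / G) <= K.
Proof.
  intros RX RS RG0 RG RM0 RM RK.
  assert (D2 : Rmax (1 / X) (1 / S) ^ 2 <= 1 / (X * X) + 1 / (S * S)).
  { assert (0 < 1 / (X * X)) by (apply Rdiv_lt_0_compat; nra).
    assert (0 < 1 / (S * S)) by (apply Rdiv_lt_0_compat; nra).
    apply Rmax_case_strong; intros _; simpl;
    replace ((1 / X) * ((1 / X) * 1)) with (1 / (X * X)) by (field; lra);
    replace ((1 / S) * ((1 / S) * 1)) with (1 / (S * S)) by (field; lra); lra. }
  assert (HH : Mr / G <= (X + 1) * (X + 1) * (S * S) / G0).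
  { unfold Rdiv. apply Rle_trans with (Mr * / G0).
    - apply Rmult_le_compat_l; auto. apply Rinv_le_contravar; lra.
    - apply Rmult_le_compat_r; auto. left; apply Rinv_0_lt_compat; lra. }
  apply Rle_trans with ((1 / (X * X) + 1 / (S * S)) * ((X + 1) * (X + 1) * (S * S) / G0)).
  { apply Rmult_le_compat; auto.
    - apply pow_le. apply Rle_trans with (1 / X); [left; apply Rdiv_lt_0_compat; lra|apply Rmax_l].
    - unfold Rdiv; apply Rmult_le_pos; auto. left; apply Rinv_0_lt_compat; lra. }
  replace ((1 / (X * X) + 1 / (S * S)) * ((X + 1) * (X + 1) * (S * S) / G0)) with
    (((X + 1) * (X + 1) * (S * S) + (X + 1) * (X + 1) * (X * X)) / ((X * X) * G0))
    by (field; repeat split; lra).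
  apply div_le_K. apply Rmult_lt_0_compat; [apply Rmult_lt_0_compat|]; lra. lra.
Qed.

Lemma Ppt_height m j : (2 <= m)%Z ->
  Defs.dist (Ppt m j) ^ 2 * height (Ppt m j) <= IZR (4 * sg m * sg m + 2).
Proof.
  intro Hm.
  destruct (pt_facts m j Hm) as [Hs [Hu [Huv [Hp [Hpq [Ey [Et [Hj Hpell]]]]]]]].
  destruct (Ppt_pos m Hm j) as [Hx1 [Hs1 _]].
  rewrite Ppt_dist by auto.
  set (q := pq m j) in *. set (u := pu m j) in *. set (v := pv m j) in *.
  set (p := pp m j) in *. set (x := xx m j) in *. set (s := ss m j) in *.
  assert (Ex : x = (u * v)%Z) by reflexivity.
  assert (Es : s = (sg m * u * p)%Z) by reflexivity.
  unfold height, Ppt; cbn [px py ps pt_].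
  set (M := Z.max _ _).
  set (G := (_ * _ * _ * _)%Z).
  assert (HM : (M <= (x + 1) * (x + 1) * (s * s))%Z) by (apply max_bound; lia).
  assert (HM0 : (0 <= M)%Z).
  { unfold M. apply Z.le_trans with (Z.abs (x * x * s * (s - 1))).
    apply Z.abs_nonneg. apply Z.le_trans with (2 := Z.le_max_l _ _). apply Z.le_max_l. }
  assert (HG : (u * v * p * q <= G)%Z).
  { unfold G.
    assert (g1 : (u <= Z.gcd x s)%Z).
    { apply gcd_ge; try lia. rewrite Ex; apply Z.divide_factor_l.
      rewrite Es. exists (sg m * p)%Z. ring. }
    assert (g2 : (v <= Z.gcd x (s - 1))%Z).
    { apply gcd_ge; try lia. rewrite Ex; apply Z.divide_factor_r.
      rewrite Et. apply Z.divide_factor_l. }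
    assert (g3 : (p <= Z.gcd (x + 1) s)%Z).
    { apply gcd_ge; try lia. rewrite Ey; apply Z.divide_factor_l.
      rewrite Es. apply Z.divide_factor_r. }
    assert (g4 : (q <= Z.gcd (x + 1) (s - 1))%Z).
    { apply gcd_ge; try lia. rewrite Ey; apply Z.divide_factor_r.
      rewrite Et. apply Z.divide_factor_r. }
    assert (0 <= u * v)%Z by (apply Z.mul_nonneg_nonneg; lia).
    assert (0 <= u * v * p)%Z by (apply Z.mul_nonneg_nonneg; lia).
    apply Z.mul_le_mono_nonneg; [lia| |lia|exact g4].
    apply Z.mul_le_mono_nonneg; [lia| |lia|exact g3].
    apply Z.mul_le_mono_nonneg; [lia|exact g1|lia|exact g2]. }
  assert (Key := key_ineq u v p q (sg m) x s Hu Huv Hp Hpq Hs Ex Ey Es).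
  assert (RX : 0 < IZR x) by (apply IZR_lt; lia).
  assert (RS : 0 < IZR s) by (apply IZR_lt; lia).
  assert (RG0 : 0 < IZR (u * v * p * q)).
  { apply IZR_lt. assert (0 < u * v)%Z by (apply Z.mul_pos_pos; lia).
    assert (0 < u * v * p)%Z by (apply Z.mul_pos_pos; lia).
    apply Z.mul_pos_pos; lia. }
  assert (RG : IZR (u * v * p * q) <= IZR G) by (apply IZR_le; auto).
  assert (RM : IZR M <= IZR ((x + 1) * (x + 1) * (s * s))) by (apply IZR_le; auto).
  assert (RM0 : 0 <= IZR M) by (apply IZR_le; auto).
  assert (RK := IZR_le _ _ Key).
  rewrite ?mult_IZR, ?plus_IZR in RK. rewrite ?plus_IZR, ?mult_IZR. rewrite ?mult_IZR, ?plus_IZR in RM.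
  rewrite !mult_IZR in RG0, RG.
  apply real_part with (IZR u * IZR v * IZR p * IZR q); auto.
  repeat (rewrite mult_IZR in RK || rewrite plus_IZR in RK). exact RK.
Qed.


Lemma deg_le_quartic a0 a1 a2 a3 a4 :
  deg_le 4 (fun r => a0 + a1 * r + a2 * r ^ 2 + a3 * r ^ 3 + a4 * r ^ 4).
Proof.
  assert (P : forall k, (k <= 4)%nat -> forall a, deg_le 4 (fun r => a * r ^ k)).
  { intros k Hk a. apply deg_le_scal. apply deg_le_mono with (1 * k)%nat. lia.
    apply deg_le_pow. apply deg_le_id. }
  repeat apply deg_le_plus; try (apply P; lia).
  apply deg_le_const.
  apply deg_le_scal. apply deg_le_mono with 1%nat. lia. apply deg_le_id.
Qed.

Definition Dl (sR : R) r := 1 - sR * (r * r).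
Definition Xf (sR : R) r := 2 * r * (2 * sR * r - 1 - sR * (r * r)).
Definition Sf (sR : R) r := 2 * sR * r * (1 + sR * (r * r) - 2 * r).
Definition Rm (sR : R) f r := hom f (Xf sR r + Dl sR r * Dl sR r) (Xf sR r) (Sf sR r - Dl sR r * Dl sR r) (Sf sR r).

Lemma Rm_deg (sR : R) f : deg_le (2 * 4 * pdeg f) (Rm sR f).
Proof.
  unfold Rm. apply hom_deg.
  - apply deg_le_ext with (fun r => 1 + (-2) * r + (4 * sR - 2 * sR) * r ^ 2 + (-2 * sR) * r ^ 3 + (sR * sR) * r ^ 4).
    apply deg_le_quartic. intro; unfold Xf, Dl; ring.
  - apply deg_le_ext with (fun r => 0 + (-2) * r + (4 * sR) * r ^ 2 + (-2 * sR) * r ^ 3 + 0 * r ^ 4).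
    apply deg_le_quartic. intro; unfold Xf, Dl; ring.
  - apply deg_le_ext with (fun r => (-1) + (2 * sR) * r + (-4 * sR + 2 * sR) * r ^ 2 + (2 * sR * sR) * r ^ 3 + (- (sR * sR)) * r ^ 4).
    apply deg_le_quartic. intro; unfold Sf, Dl; ring.
  - apply deg_le_ext with (fun r => 0 + (2 * sR) * r + (-4 * sR) * r ^ 2 + (2 * sR * sR) * r ^ 3 + 0 * r ^ 4).
    apply deg_le_quartic. intro; unfold Sf, Dl; ring.
Qed.

Lemma param (sR : R) q u : u <> 0 -> q + 1 <> 0 -> q * q - sR * u * u = 1 ->
  Dl sR (u / (q + 1)) = 2 / (q + 1) /\
  Xf sR (u / (q + 1)) = (2 / (q + 1)) ^ 2 * (u * (sR * u - q)) /\
  Sf sR (u / (q + 1)) = (2 / (q + 1)) ^ 2 * (sR * u * (q - u)).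
Proof.
  intros Hu Hq H.
  assert (E : sR = (q * q - 1) / (u * u)) by (field_simplify_eq; [lra| auto]).
  unfold Dl, Xf, Sf. rewrite E. repeat split; field; auto.
Qed.

Lemma Rm_val (sR : R) f q u : u <> 0 -> q + 1 <> 0 -> q * q - sR * u * u = 1 ->
  Rm sR f (u / (q + 1)) = ((2 / (q + 1)) ^ 2) ^ pdeg f * ((2 / (q + 1)) ^ 2) ^ pdeg f *
     hom f (u * (sR * u - q) + 1) (u * (sR * u - q)) (sR * u * (q - u) - 1) (sR * u * (q - u)).
Proof.
  intros Hu Hq H. destruct (param sR q u Hu Hq H) as [E1 [E2 E3]].
  unfold Rm. rewrite E1, E2, E3. rewrite <- hom_scale. f_equal; simpl; field; auto.
Qed.

Lemma u_of_r (sR : R) q u : u <> 0 -> q + 1 <> 0 -> q * q - sR * u * u = 1 ->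
  2 * (u / (q + 1)) / Dl sR (u / (q + 1)) = u.
Proof.
  intros Hu Hq H. destruct (param sR q u Hu Hq H) as [E1 _]. rewrite E1. field; auto.
Qed.


Definition Sx (sR x0 : R) := (1 + sqrt (1 + 4 * sR * x0 * (x0 + 1))) / 2.

Lemma Sx_eq sR x0 : 0 <= sR -> 0 < x0 -> Sx sR x0 * Sx sR x0 - Sx sR x0 = sR * x0 * (x0 + 1)
  /\ 1 <= Sx sR x0.
Proof.
  intros Hs Hx. unfold Sx.
  assert (P : 0 <= 1 + 4 * sR * x0 * (x0 + 1)) by (assert (0 <= 4 * sR * x0 * (x0 + 1)) by (repeat apply Rmult_le_pos; lra); lra).
  pose proof (sqrt_sqrt _ P). pose proof (sqrt_pos (1 + 4 * sR * x0 * (x0 + 1))).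
  assert (1 <= sqrt (1 + 4 * sR * x0 * (x0 + 1))).
  { apply Rle_trans with (sqrt 1); [rewrite sqrt_1; lra|]. apply sqrt_le_1_alt. assert (0 <= 4 * sR * x0 * (x0 + 1)) by (repeat apply Rmult_le_pos; lra). lra. }
  split; nra.
Qed.

Lemma inv_param sR x0 : 3 <= sR -> 0 < x0 ->
  exists q u, 0 < u /\ 0 < q /\ q * q - sR * u * u = 1 /\ u * (sR * u - q) = x0 /\
     sR * u * (q - u) = Sx sR x0.
Proof.
  intros Hs Hx. destruct (Sx_eq sR x0 ltac:(lra) Hx) as [ES HS].
  set (S := Sx sR x0) in *.
  set (U := (S + sR * x0) / (sR * (sR - 1))).
  assert (HU : 0 < U) by (unfold U; apply Rdiv_lt_0_compat; nra).
  set (u := sqrt U).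
  assert (Hu : 0 < u) by (apply sqrt_lt_R0; auto).
  assert (Hu2 : u * u = U) by (apply sqrt_sqrt; lra).
  set (q := (S + x0) / ((sR - 1) * u)).
  assert (Hq : 0 < q) by (unfold q; apply Rdiv_lt_0_compat; nra).
  assert (Hqu : q * u = (S + x0) / (sR - 1)) by (unfold q; field; lra).
  exists q, u. repeat split; auto.
  -
    apply Rmult_eq_reg_r with (u * u); [|nra].
    replace ((q * q - sR * u * u) * (u * u)) with ((q * u) * (q * u) - sR * (u * u) * (u * u)) by ring.
    rewrite Hqu, Hu2. unfold U.
    replace (sR * ((S + sR * x0) / (sR * (sR - 1))) * ((S + sR * x0) / (sR * (sR - 1))))
      with ((S + sR * x0) * (S + sR * x0) / (sR * (sR - 1) * (sR - 1))) by (field; lra).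
    apply Rmult_eq_reg_r with (sR * (sR - 1) * (sR - 1)); [|apply Rmult_integral_contrapositive_currified; [|lra]; apply Rmult_integral_contrapositive_currified; lra].
    field_simplify; [|lra|lra]. nra.
  - replace (u * (sR * u - q)) with (sR * (u * u) - q * u) by ring.
    rewrite Hqu, Hu2. unfold U. field. lra.
  - replace (sR * u * (q - u)) with (sR * (q * u) - sR * (u * u)) by ring.
    rewrite Hqu, Hu2. unfold U. field. lra.
Qed.


Definition rj m j := IZR (pu m j) / (IZR (pq m j) + 1).

Lemma pell_real m j : (2 <= m)%Z ->
  IZR (pu m j) <> 0 /\ IZR (pq m j) + 1 <> 0 /\
  IZR (pq m j) * IZR (pq m j) - IZR (sg m) * IZR (pu m j) * IZR (pu m j) = 1 /\
  IZR (xx m j) = IZR (pu m j) * (IZR (sg m) * IZR (pu m j) - IZR (pq m j)) /\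
  IZR (ss m j) = IZR (sg m) * IZR (pu m j) * (IZR (pq m j) - IZR (pu m j)).
Proof.
  intro Hm. destruct (pell_props m j Hm) as [H1 [H2 H3]].
  repeat split.
  - apply not_0_IZR. lia.
  - assert (0 < IZR (pq m j)) by (apply IZR_lt; lia). lra.
  - rewrite <- !mult_IZR, <- minus_IZR. rewrite H1. auto.
  - unfold xx, pv. rewrite mult_IZR, minus_IZR, mult_IZR. auto.
  - unfold ss, pp. rewrite !mult_IZR, minus_IZR. auto.
Qed.

Lemma core_m f m J : (2 <= m)%Z ->
  (forall j, (J <= j)%nat -> evalP f (Ppt m j) = 0) ->
  forall r, Rm (IZR (sg m)) f r = 0.
Proof.
  intros Hm HJ.
  apply deg_le_root with (2 * 4 * pdeg f)%nat (fun i => rj m (J + i)).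
  - apply Rm_deg.
  - intros i k _ _ Hik E.
    destruct (pell_real m (J + i) Hm) as [A1 [A2 [A3 _]]].
    destruct (pell_real m (J + k) Hm) as [B1 [B2 [B3 _]]].
    pose proof (u_of_r _ _ _ A1 A2 A3) as U1.
    pose proof (u_of_r _ _ _ B1 B2 B3) as U2.
    unfold rj in E. rewrite E in U1. rewrite U1 in U2.
    apply eq_IZR in U2.
    destruct (Nat.lt_total (J + i) (J + k)) as [L|[L|L]].
    + pose proof (pell_mono m Hm _ _ L). lia.
    + lia.
    + pose proof (pell_mono m Hm _ _ L). lia.
  - intros i _. unfold rj.
    destruct (pell_real m (J + i) Hm) as [A1 [A2 [A3 [A4 A5]]]].
    rewrite Rm_val by auto. rewrite <- A4, <- A5.
    destruct (Ppt_pos m Hm (J + i)) as [Hx [Hs _]].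
    assert (X0 : IZR (xx m (J + i)) <> 0) by (apply not_0_IZR; lia).
    assert (S0 : IZR (ss m (J + i)) <> 0) by (apply not_0_IZR; lia).
    rewrite hom_peval by auto.
    assert (E := HJ (J + i)%nat ltac:(lia)).
    unfold evalP, wcoord, zcoord, Ppt in E. cbn [px py ps pt_] in E.
    rewrite plus_IZR, minus_IZR in E. rewrite E. ring.
Qed.

Lemma core_x0 f m : (2 <= m)%Z -> (forall r, Rm (IZR (sg m)) f r = 0) ->
  forall x0, 0 < x0 -> hom f (x0 + 1) x0 (Sx (IZR (sg m)) x0 - 1) (Sx (IZR (sg m)) x0) = 0.
Proof.
  intros Hm HR x0 Hx.
  assert (Hs : 3 <= IZR (sg m)).
  { destruct (pt_facts m 0 Hm) as [Hs _]. apply IZR_le in Hs. auto. }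
  destruct (inv_param _ _ Hs Hx) as [q [u [Hu [Hq [E1 [E2 E3]]]]]].
  assert (R := HR (u / (q + 1))).
  rewrite Rm_val in R by lra. rewrite E2, E3 in R.
  assert (L : (2 / (q + 1)) ^ 2 <> 0) by (apply pow_nonzero; apply Rgt_not_eq; apply Rdiv_lt_0_compat; lra).
  apply Rmult_integral in R. destruct R as [R|R]; auto.
  apply Rmult_integral in R. destruct R as [R|R]; apply (pow_nonzero _ (pdeg f)) in L; contradiction.
Qed.


Lemma sg_mono a b : (2 <= a)%Z -> (a < b)%Z -> (sg a < sg b)%Z.
Proof. intros. unfold sg. nia. Qed.

Lemma Sx_inj a b x0 : 0 <= a -> 0 <= b -> 0 < x0 -> Sx a x0 = Sx b x0 -> a = b.
Proof.
  intros Ha Hb Hx E. unfold Sx in E.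
  assert (E2 : sqrt (1 + 4 * a * x0 * (x0 + 1)) = sqrt (1 + 4 * b * x0 * (x0 + 1))) by lra.
  apply sqrt_inj in E2.
  - assert (0 < 4 * x0 * (x0 + 1)) by (apply Rmult_lt_0_compat; lra).
    apply Rmult_eq_reg_r with (4 * x0 * (x0 + 1)); [|lra]. lra.
  - assert (0 <= 4 * a * x0 * (x0 + 1)) by (repeat apply Rmult_le_pos; lra). lra.
  - assert (0 <= 4 * b * x0 * (x0 + 1)) by (repeat apply Rmult_le_pos; lra). lra.
Qed.

Lemma peval_zero_coef f : (forall w z, 1 < w -> 1 < z -> peval f w z = 0) ->
  forall i j, (i <= pdeg f)%nat -> (j <= pdeg f)%nat -> Q2R (pcoef f i j) = 0.
Proof.
  intros H i j Hi Hj.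
  assert (A : forall z, 1 < z -> forall i, (i <= pdeg f)%nat ->
     sum_f_R0 (fun j => Q2R (pcoef f i j) * z ^ j) (pdeg f) = 0).
  { intros z Hz. apply coef_zero. intros t Ht.
    rewrite <- (H t z Ht Hz). unfold peval. apply sum_eq. intros k _.
    rewrite Rmult_comm, scal_sum. apply sum_eq. intros l _. ring. }
  revert j Hj. apply coef_zero. intros z Hz. apply A; auto.
Qed.

Lemma core_all f : pnonzero f -> exists m, (2 <= m)%Z /\
  forall N, exists j, (N <= j)%nat /\ evalP f (Ppt m j) <> 0.
Proof.
  intro Hf. apply NNPP. intro Hn.
  assert (Hz : forall m, (2 <= m)%Z -> forall r, Rm (IZR (sg m)) f r = 0).
  { intros m Hm. destruct (classic (exists J, forall j, (J <= j)%nat -> evalP f (Ppt m j) = 0))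
      as [[J HJ]|HJ].
    - apply core_m with J; auto.
    - exfalso. apply Hn. exists m. split; auto. intro N. apply NNPP. intro HN. apply HJ.
      exists N. intros j Hj. apply NNPP. intro E. apply HN. exists j; auto. }
  assert (Hx : forall x0, 0 < x0 -> forall s, hom f (x0 + 1) x0 (s - 1) s = 0).
  { intros x0 Hx0.
    apply deg_le_root with (2 * 1 * pdeg f)%nat (fun i => Sx (IZR (sg (2 + Z.of_nat i))) x0).
    - apply (hom_deg f 1 (fun _ => x0 + 1) (fun _ => x0) (fun s => s - 1) (fun s => s)).
      + apply deg_le_const.
      + apply deg_le_const.
      + apply deg_le_ext with (fun s => s + -1). apply deg_le_plus. apply deg_le_id.
        apply deg_le_const. intro; ring.
      + apply deg_le_id.
    - intros i k _ _ Hik E. apply Sx_inj in E; auto.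
      + apply eq_IZR in E.
        destruct (Nat.lt_total i k) as [L|[L|L]].
        * pose proof (sg_mono (2 + Z.of_nat i) (2 + Z.of_nat k) ltac:(lia) ltac:(lia)). lia.
        * lia.
        * pose proof (sg_mono (2 + Z.of_nat k) (2 + Z.of_nat i) ltac:(lia) ltac:(lia)). lia.
      + apply IZR_le. unfold sg. nia.
      + apply IZR_le. unfold sg. nia.
    - intros i _. apply core_x0; auto. lia. apply Hz. lia. }
  assert (Hp : forall w z, 1 < w -> 1 < z -> peval f w z = 0).
  { intros w z Hw Hz1.
    assert (S0 : 1 / (1 - z) <> 0).
    { unfold Rdiv; rewrite Rmult_1_l; apply Rinv_neq_0_compat; lra. }
    assert (X0 : 1 / (w - 1) <> 0).
    { unfold Rdiv; rewrite Rmult_1_l; apply Rinv_neq_0_compat; lra. }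
    assert (E := Hx (1 / (w - 1)) ltac:(apply Rdiv_lt_0_compat; lra) (1 / (1 - z))).
    rewrite hom_peval in E by auto.
    replace ((1 / (w - 1) + 1) / (1 / (w - 1))) with w in E by (field; lra).
    replace ((1 / (1 - z) - 1) / (1 / (1 - z))) with z in E by (field; lra).
    apply Rmult_integral in E. destruct E as [E|E]; auto.
    apply Rmult_integral in E. destruct E as [E|E].
    - apply (pow_nonzero _ (pdeg f)) in X0. contradiction.
    - apply (pow_nonzero _ (pdeg f)) in S0. contradiction. }
  destruct Hf as [i [j [Hi [Hj Hc]]]]. apply Hc. apply eqR_Qeq.
  rewrite (peval_zero_coef f Hp i j Hi Hj). unfold Q2R; simpl; ring.
Qed.


Lemma coprime_mul_div (a b n : Z) : (a | n)%Z -> (b | n)%Z -> Z.gcd b a = 1%Z -> (a * b | n)%Z.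
Proof.
  intros [k Hk] Hb Hg. subst n.
  assert (Hk : (b | k)%Z) by (apply Z.gauss with a; auto; rewrite Z.mul_comm; auto).
  destruct Hk as [l Hl]. subst k. exists l. ring.
Qed.

Lemma gcd_pair_coprime (x s t : Z) : Z.gcd s t = 1%Z -> Z.gcd (Z.gcd x t) (Z.gcd x s) = 1%Z.
Proof.
  intro H. apply Z.divide_1_r_nonneg. apply Z.gcd_nonneg.
  rewrite <- H. apply Z.gcd_greatest.
  - apply Z.divide_trans with (Z.gcd x s). apply Z.gcd_divide_r. apply Z.gcd_divide_r.
  - apply Z.divide_trans with (Z.gcd x t). apply Z.gcd_divide_l. apply Z.gcd_divide_r.
Qed.

Lemma gcd_prod_le (x s t : Z) : x <> 0%Z -> Z.gcd s t = 1%Z ->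
  (Z.gcd x s * Z.gcd x t <= Z.abs x)%Z.
Proof.
  intros Hx H. apply Z.divide_pos_le. lia.
  apply Z.divide_abs_r. apply coprime_mul_div.
  apply Z.gcd_divide_l. apply Z.gcd_divide_l. apply gcd_pair_coprime; auto.
Qed.

Lemma gcd_pos (a b : Z) : a <> 0%Z -> (1 <= Z.gcd a b)%Z.
Proof.
  intro Ha. pose proof (Z.gcd_nonneg a b).
  assert (Z.gcd a b <> 0%Z) by (intro E; apply Ha; apply (Z.gcd_eq_0_l a b E)). lia.
Qed.

Lemma gcd_prod_le' (x s t : Z) : x <> 0%Z -> Z.gcd s t = 1%Z ->
  (Z.gcd s x * Z.gcd t x <= Z.abs x)%Z.
Proof. intros. rewrite (Z.gcd_comm s), (Z.gcd_comm t). apply gcd_prod_le; auto. Qed.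

Lemma abs_ratio (x y : Z) : x <> 0%Z -> y <> x -> 1 / IZR (Z.abs x) <= Rabs (IZR y / IZR x - 1).
Proof.
  intros Hx Hyx.
  assert (X : 0 < IZR (Z.abs x)) by (apply IZR_lt; lia).
  assert (Y : 1 <= IZR (Z.abs (y - x))) by (apply IZR_le; lia).
  replace (IZR y / IZR x - 1) with (IZR (y - x) / IZR x) by (rewrite minus_IZR; field; apply not_0_IZR; auto).
  unfold Rdiv. rewrite Rabs_mult, Rabs_inv. rewrite !Rabs_Zabs.
  apply Rmult_le_compat_r. left; apply Rinv_0_lt_compat; lra. lra.
Qed.

Lemma fin_bound d A B H : 0 < A -> 0 < B -> 1 / A <= d -> 1 / B <= d -> A * B <= H ->
  1 <= d ^ 2 * H.
Proof.
  intros HA HB dA dB HH.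
  assert (0 < 1 / A) by (apply Rdiv_lt_0_compat; lra).
  assert (0 < 1 / B) by (apply Rdiv_lt_0_compat; lra).
  apply Rle_trans with ((1 / A) * (1 / B) * (A * B)).
  - right. field. lra.
  - simpl. rewrite Rmult_1_r. apply Rmult_le_compat.
    + left; apply Rmult_lt_0_compat; lra.
    + left; apply Rmult_lt_0_compat; lra.
    + apply Rmult_le_compat; lra.
    + auto.
Qed.

Lemma abs_ge1 z : z <> 0%Z -> (1 <= Z.abs z)%Z.
Proof. lia. Qed.

Lemma M_ge (x y s t : Z) :
  let M := Z.max (Z.max (Z.abs (x * x * s * t)) (Z.abs (y * y * s * t)))
                 (Z.max (Z.abs (t * t * x * y)) (Z.abs (s * s * x * y))) in
  (Z.abs x * Z.abs x * (Z.abs s * Z.abs t) <= M /\ Z.abs s * Z.abs s * (Z.abs x * Z.abs y) <= M)%Z.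
Proof.
  intro M. split.
  - unfold M. apply Z.le_trans with (2 := Z.le_max_l _ _).
    apply Z.le_trans with (2 := Z.le_max_l _ _). rewrite !Z.abs_mul. apply Z.eq_le_incl. ring.
  - unfold M. apply Z.le_trans with (2 := Z.le_max_r _ _).
    apply Z.le_trans with (2 := Z.le_max_r _ _). rewrite !Z.abs_mul. apply Z.eq_le_incl. ring.
Qed.

Lemma G_ge1 (x y s t : Z) : x <> 0%Z -> y <> 0%Z ->
  (1 <= Z.gcd x s * Z.gcd x t * Z.gcd y s * Z.gcd y t)%Z.
Proof.
  intros Hx Hy.
  pose proof (gcd_pos x s Hx). pose proof (gcd_pos x t Hx).
  pose proof (gcd_pos y s Hy). pose proof (gcd_pos y t Hy).
  assert (1 <= Z.gcd x s * Z.gcd x t)%Z by (apply (Z.mul_le_mono_nonneg 1 _ 1); lia).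
  assert (1 <= Z.gcd x s * Z.gcd x t * Z.gcd y s)%Z by (apply (Z.mul_le_mono_nonneg 1 _ 1); lia).
  apply (Z.mul_le_mono_nonneg 1 _ 1); lia.
Qed.

Lemma GG_le (x y s t : Z) : x <> 0%Z -> y <> 0%Z -> s <> 0%Z -> t <> 0%Z ->
  Z.gcd x y = 1%Z -> Z.gcd s t = 1%Z ->
  let G := (Z.gcd x s * Z.gcd x t * Z.gcd y s * Z.gcd y t)%Z in
  (G * G <= Z.abs x * Z.abs y * Z.abs s * Z.abs t)%Z.
Proof.
  intros Hx Hy Hs Ht Hxy Hst G.
    assert (g1 := gcd_prod_le x s t Hx Hst).
    assert (g2 := gcd_prod_le y s t Hy Hst).
    assert (g3 := gcd_prod_le' s x y Hs Hxy).
    assert (g4 := gcd_prod_le' t x y Ht Hxy).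
    pose proof (gcd_pos x s Hx). pose proof (gcd_pos x t Hx).
    pose proof (gcd_pos y s Hy). pose proof (gcd_pos y t Hy).
    unfold G.
    set (a := Z.gcd x s) in *. set (b := Z.gcd x t) in *.
    set (c := Z.gcd y s) in *. set (e := Z.gcd y t) in *.
    replace (a * b * c * e * (a * b * c * e))%Z with ((a * b) * (c * e) * (a * c) * (b * e))%Z by ring.
      assert (0 <= a * b)%Z by (apply Z.mul_nonneg_nonneg; lia).
      assert (0 <= c * e)%Z by (apply Z.mul_nonneg_nonneg; lia).
      assert (0 <= a * c)%Z by (apply Z.mul_nonneg_nonneg; lia).
      assert (0 <= b * e)%Z by (apply Z.mul_nonneg_nonneg; lia).
      assert (0 <= a * b * (c * e))%Z by (apply Z.mul_nonneg_nonneg; lia).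
      assert (0 <= a * b * (c * e) * (a * c))%Z by (apply Z.mul_nonneg_nonneg; lia).
      apply Z.mul_le_mono_nonneg; [lia| |lia|exact g4].
      apply Z.mul_le_mono_nonneg; [lia| |lia|exact g3].
      apply Z.mul_le_mono_nonneg; [lia|exact g1|lia|exact g2].
Qed.

Lemma MM_le (X Y S T G M : Z) : (1 <= X)%Z -> (1 <= Y)%Z -> (1 <= S)%Z -> (1 <= T)%Z ->
  (0 <= G)%Z -> (G * G <= X * Y * S * T)%Z ->
  (X * X * (S * T) <= M)%Z -> (S * S * (X * Y) <= M)%Z -> (X * S * G <= M)%Z.
Proof.
  intros X1 Y1 S1 T1 G0 GG Mx Ms.
    apply Z.square_le_simpl_nonneg. lia.
      assert (0 <= X * X * (S * T))%Z by (apply Z.mul_nonneg_nonneg; apply Z.mul_nonneg_nonneg; lia).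
      assert (0 <= S * S * (X * Y))%Z by (apply Z.mul_nonneg_nonneg; apply Z.mul_nonneg_nonneg; lia).
      apply Z.le_trans with ((X * X * (S * T)) * (S * S * (X * Y)))%Z.
      - replace ((X * X * (S * T)) * (S * S * (X * Y)))%Z with ((X * S) * (X * S) * (X * Y * S * T))%Z by ring.
        replace (X * S * G * (X * S * G))%Z with ((X * S) * (X * S) * (G * G))%Z by ring.
        apply Z.mul_le_mono_nonneg_l; auto. apply Z.mul_nonneg_nonneg; apply Z.mul_nonneg_nonneg; lia.
      - apply Z.mul_le_mono_nonneg; auto.
Qed.

Lemma lower P : valid P -> in_chart P -> ~ isQ P -> Defs.dist P < 1 ->
  0 < Defs.dist P /\ 1 <= Defs.dist P ^ 2 * height P.
Proof.
  destruct P as [x y s t]. unfold valid, in_chart, isQ, Defs.dist, height, wcoord, zcoord.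
  cbn [px py ps pt_]. intros [Hxy [Hst Hnot]] [Hx Hs] HQ Hd.
  set (d := Rmax _ _) in *.
  assert (dw : Rabs (IZR y / IZR x - 1) <= d) by apply Rmax_l.
  assert (dz : Rabs (IZR t / IZR s - 1) <= d) by apply Rmax_r.
  assert (Hy : y <> 0%Z).
  { intro E; subst y. rewrite Rdiv_0_l in dw.
    rewrite Rminus_0_l, Rabs_Ropp, Rabs_R1 in dw. lra. }
  assert (Ht : t <> 0%Z).
  { intro E; subst t. rewrite Rdiv_0_l in dz.
    rewrite Rminus_0_l, Rabs_Ropp, Rabs_R1 in dz. lra. }
  pose proof (abs_ge1 x Hx) as X1. pose proof (abs_ge1 y Hy) as Y1.
  pose proof (abs_ge1 s Hs) as S1. pose proof (abs_ge1 t Ht) as T1.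
  assert (RX : 0 < IZR (Z.abs x)) by (apply IZR_lt; lia).
  assert (RS : 0 < IZR (Z.abs s)) by (apply IZR_lt; lia).
  destruct (M_ge x y s t) as [Mx Ms].
  pose proof (G_ge1 x y s t Hx Hy) as G1.
  pose proof (GG_le x y s t Hx Hy Hs Ht Hxy Hst) as GG. cbv zeta in GG.
  cbv zeta in Mx, Ms.
  set (M := Z.max _ _) in *.
  set (G := (Z.gcd x s * Z.gcd x t * Z.gcd y s * Z.gcd y t)%Z) in *.
  assert (RG : 0 < IZR G) by (apply IZR_lt; lia).
  assert (dpos : 0 < d).
  { destruct (Z.eq_dec y x) as [E|E].
    - assert (t <> s) by (intro; apply HQ; auto).
      pose proof (abs_ratio s t Hs H).
      assert (0 < 1 / IZR (Z.abs s)) by (apply Rdiv_lt_0_compat; lra). lra.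
    - pose proof (abs_ratio x y Hx E).
      assert (0 < 1 / IZR (Z.abs x)) by (apply Rdiv_lt_0_compat; lra). lra. }
  split; auto.
  destruct (Z.eq_dec y x) as [Eyx|Eyx]; [|destruct (Z.eq_dec t s) as [Ets|Ets]].
  -
    subst y. assert (Ax : Z.abs x = 1%Z) by (rewrite <- Z.gcd_diag; auto).
    assert (Ets : t <> s) by (intro; apply HQ; auto).
    assert (Gx : forall b, Z.gcd x b = 1%Z) by (intro b; rewrite <- Z.gcd_abs_l, Ax; apply Z.gcd_1_l).
    assert (HG : G = 1%Z) by (unfold G; rewrite !Gx; ring).
    rewrite Ax in Ms. rewrite !Z.mul_1_l, Z.mul_1_r in Ms.
    pose proof (abs_ratio s t Hs Ets) as Hr.
    assert (RM : IZR (Z.abs s) * IZR (Z.abs s) <= IZR M) by (rewrite <- mult_IZR; apply IZR_le; exact Ms).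
    rewrite HG. unfold Rdiv. rewrite Rinv_1, Rmult_1_r.
    apply fin_bound with (IZR (Z.abs s)) (IZR (Z.abs s)); auto; lra.
  -
    subst t. assert (As : Z.abs s = 1%Z) by (rewrite <- Z.gcd_diag; auto).
    assert (Gs : forall b, Z.gcd b s = 1%Z) by (intro b; rewrite Z.gcd_comm, <- Z.gcd_abs_l, As; apply Z.gcd_1_l).
    assert (HG : G = 1%Z) by (unfold G; rewrite !Gs; ring).
    rewrite As in Mx. rewrite !Z.mul_1_r in Mx.
    pose proof (abs_ratio x y Hx Eyx) as Hr.
    assert (RM : IZR (Z.abs x) * IZR (Z.abs x) <= IZR M) by (rewrite <- mult_IZR; apply IZR_le; exact Mx).
    rewrite HG. unfold Rdiv. rewrite Rinv_1, Rmult_1_r.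
    apply fin_bound with (IZR (Z.abs x)) (IZR (Z.abs x)); auto; lra.
  -
    pose proof (abs_ratio x y Hx Eyx) as Hr1.
    pose proof (abs_ratio s t Hs Ets) as Hr2.
    assert (MM : (Z.abs x * Z.abs s * G <= M)%Z).
    { apply MM_le with (Z.abs y) (Z.abs t); auto. lia. }
    apply fin_bound with (IZR (Z.abs x)) (IZR (Z.abs s)); try lra.
    apply Rmult_le_reg_r with (IZR G); auto.
    replace (IZR M / IZR G * IZR G) with (IZR M) by (field; lra).
    rewrite <- !mult_IZR. apply IZR_le. auto.
Qed.


Lemma alpha_ge_any V g : admissible V g -> 2 <= g.
Proof.
  intros [Hg [Pn [HP [Hcv [B HB]]]]].
  destruct (Rle_or_lt 2 g) as [|Hlt]; auto. exfalso.
  set (B' := Rmax B 1).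
  assert (HB1 : 1 <= B') by apply Rmax_r.
  set (del := Rmin (exp (ln B' / (g - 2))) (1 / 2)).
  assert (Hdel : 0 < del) by (apply Rmin_pos; [apply exp_pos|lra]).
  destruct (Hcv del Hdel) as [N HN].
  assert (HNd := HN N (le_n N)). unfold R_dist in HNd. rewrite Rminus_0_r in HNd.
  destruct (HP N) as [_ [Hv [Hc HQ]]].
  set (d := Defs.dist (Pn N)) in *.
  assert (Hd1 : Rabs d < 1 / 2) by (eapply Rlt_le_trans; [apply HNd| apply Rmin_r]).
  assert (Hd2 : Rabs d < exp (ln B' / (g - 2))) by (eapply Rlt_le_trans; [apply HNd| apply Rmin_l]).
  assert (Hdl : d < 1) by (apply Rabs_def2 in Hd1; lra).
  destruct (lower (Pn N) Hv Hc HQ Hdl) as [dpos Hlow]. fold d in dpos, Hlow.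
  rewrite Rabs_right in Hd2 by lra.
  assert (Hln : ln d < ln B' / (g - 2)).
  { rewrite <- (ln_exp (ln B' / (g - 2))). apply ln_increasing; auto. }
  assert (Hk : ln B' < (g - 2) * ln d).
  { apply Rmult_lt_compat_l with (r := 2 - g) in Hln; [|lra].
    replace ((2 - g) * (ln B' / (g - 2))) with (- ln B') in Hln by (field; lra). lra. }
  assert (E2 : d ^ 2 = exp (2 * ln d)).
  { replace (2 * ln d) with (ln d + ln d) by ring. rewrite exp_plus, exp_ln by auto. ring. }
  set (Hh := height (Pn N)) in *.
  assert (Hpos : 0 < Hh).
  { assert (0 < d ^ 2) by (apply pow_lt; auto).
    destruct (Rle_or_lt Hh 0); auto. nra. }
  assert (Big : B' < Rpower d g * Hh).
  { unfold Rpower. apply Rlt_le_trans with (exp ((g - 2) * ln d)).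
    - rewrite <- (exp_ln B') by lra. apply exp_increasing. rewrite Rmult_comm. lra.
    - replace (exp ((g - 2) * ln d)) with (exp (g * ln d) * / d ^ 2).
      + apply Rmult_le_compat_l. left; apply exp_pos.
        assert (0 < d ^ 2) by (apply pow_lt; auto).
        apply Rmult_le_reg_l with (d ^ 2); auto. rewrite Rinv_r by lra. lra.
      + rewrite E2. rewrite <- exp_Ropp, <- exp_plus. f_equal. ring. }
  assert (HBN := HB N). fold d Hh in HBN.
  assert (Rpower d g * Hh <= B) by (eapply Rle_trans; [apply Rle_abs|apply HBN]).
  assert (B <= B') by apply Rmax_l. lra.
Qed.

Lemma height_nonneg P : px P <> 0%Z -> py P <> 0%Z -> 0 <= height P.
Proof.
  destruct P as [x y s t]. unfold height. cbn [px py ps pt_]. intros Hx Hy.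
  apply Rmult_le_pos.
  - apply IZR_le. apply Z.le_trans with (Z.abs (x * x * s * t)). apply Z.abs_nonneg.
    apply Z.le_trans with (2 := Z.le_max_l _ _). apply Z.le_max_l.
  - left. apply Rinv_0_lt_compat. apply IZR_lt. pose proof (G_ge1 x y s t Hx Hy). lia.
Qed.

Lemma pell_adm V m (sig : nat -> nat) : (2 <= m)%Z -> (forall n, (n <= sig n)%nat) ->
  (forall n, V (Ppt m (sig n))) -> admissible V 2.
Proof.
  intros Hm Hs HV. split; [lra|]. exists (fun n => Ppt m (sig n)). split; [|split].
  - intro n. split; auto. split; [apply Ppt_valid; auto|]. split.
    apply Ppt_chart; auto. apply Ppt_notQ.
  - intros eps Heps. destruct (archimed (/ eps)) as [A1 A2].
    assert (Hi : 0 < / eps) by (apply Rinv_0_lt_compat; auto).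
    exists (Z.to_nat (up (/ eps))). intros n Hn. unfold R_dist. rewrite Rminus_0_r.
    destruct (Ppt_dist_le m Hm (sig n)) as [D1 D2].
    rewrite Rabs_right by lra.
    assert (INR (Z.to_nat (up (/ eps))) = IZR (up (/ eps))).
    { rewrite INR_IZR_INZ. rewrite Z2Nat.id; auto. apply le_IZR. lra. }
    assert (INR (Z.to_nat (up (/ eps))) <= INR (sig n)) by (apply le_INR; specialize (Hs n); lia).
    apply Rle_lt_trans with (1 / (INR (sig n) + 1)); auto.
    apply Rmult_lt_reg_r with (INR (sig n) + 1). pose proof (pos_INR (sig n)); lra.
    replace (1 / (INR (sig n) + 1) * (INR (sig n) + 1)) with 1 by (field; pose proof (pos_INR (sig n)); lra).
    apply Rmult_lt_reg_l with (/ eps); auto.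
    rewrite <- Rmult_assoc, Rinv_l, Rmult_1_l, Rmult_1_r by lra. lra.
  - exists (IZR (4 * sg m * sg m + 2)). intro n.
    destruct (Ppt_dist_le m Hm (sig n)) as [D1 D2].
    replace 2 with (INR 2) by (simpl; ring). rewrite Rpower_pow by auto.
    rewrite Rabs_right. apply Ppt_height; auto.
    apply Rle_ge, Rmult_le_pos. apply pow_le; lra.
    pose proof (Ppt_pos m Hm (sig n)) as [X1 _].
    apply height_nonneg; unfold Ppt; cbn [px py]; lia.
Qed.

Lemma ess_le S : dense_family S -> alpha_le (dopen S) 2.
Proof.
  intros [f [Hin Hnz]] b Hb. exists 2. split; [|lra].
  destruct (core_all f Hnz) as [m [Hm Hinf]].
  set (sig := fun N => proj1_sig (constructive_indefinite_description _ (Hinf N))).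
  apply pell_adm with m sig; auto.
  - intro n. unfold sig. destruct (constructive_indefinite_description _ (Hinf n)) as [j Hj']. simpl. destruct Hj'; auto.
  - intro n. unfold sig. destruct (constructive_indefinite_description _ (Hinf n)) as [j Hj']. simpl. destruct Hj' as [_ Hj]. split; [apply Ppt_valid; auto|]. split; [apply Ppt_torus; auto|].
    exists f. auto.
Qed.

Definition one : poly2 := mkPoly2 0 (fun _ _ => 1%Q).

Lemma one_nz : pnonzero one.
Proof. exists 0%nat, 0%nat. simpl. split; [lia|split; [lia|]]. intro E. discriminate E. Qed.

Lemma one_eval P : evalP one P = 1.
Proof. unfold evalP, peval. simpl. unfold Q2R. simpl. field. Qed.

Theorem mainTheorem1 :
  alpha_eq Y4 2 /\ alpha_ess_eq 2 /\ (forall S : list poly2, ~ locally_accumulating S).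
Proof.
  split; [|split].
  - split.
    + intros b Hb. exists 2. split; [|lra].
      apply pell_adm with 2%Z (fun n => n); auto. lia.
      intro n. unfold Y4. apply Ppt_valid. lia.
    + intros g Hg. apply alpha_ge_any with Y4; auto.
  - split.
    + apply ess_le.
    + intros b Hb. exists (one :: nil). split.
      * exists one. split; [left; auto|apply one_nz].
      * exists 2. split; auto. intros g Hg. apply alpha_ge_any with (dopen (one :: nil)); auto.
  - intros S [a [[Hess1 Hess2] Hacc]].
    assert (Hd : dense_in_closed S (one :: nil)).
    { intros g Hg P HP. apply Hg; auto. destruct HP as [Hv [Ht _]].
      split; auto. split; auto. exists one. split; [left; auto|]. rewrite one_eval. lra. }
    destruct (Hacc _ Hd) as [g [Hg Hga]].
    pose proof (alpha_ge_any _ _ Hg).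
    destruct (Hess2 2 ltac:(lra)) as [S' [HS' [c [Hc Hge]]]].
    destruct (ess_le S' HS' c Hc) as [g' [Hg' Hg'c]].
    pose proof (Hge g' Hg'). lra.
Qed.
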